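(* Let $u$ and $v$ be monomials and let $h_1,\dots,h_m\in\{x_1,\dots,x_n\}$. (i) If $\tilde p_{x_i,x_j}=1$ for all $x_i\in\mu(u)$ and all $x_j\in\mu(v)$, then $[u,v]=0$ in $\mathfrak{B}(V)$. (ii) If the monomial $h_1h_2\cdots h_m$ is disconnected, then $\sigma(h_1,\dots,h_m)=0$ for every full bracketing $\sigma$ of $h_1,\dots,h_m$ (in this order) by the bracket $[\,,\,]$. (iii) If $h_1h_2\cdots h_m\neq 0$ in $\mathfrak{B}(V)$ and $h_1h_2\cdots h_m$ is disconnected, then $h_1h_2\cdots h_m\notin\mathfrak{L}(V)$.
   Context: $F$ is an algebraically closed field of characteristic $0$. $V$ is a braided vector space of diagonal type with basis $x_1,\dots,x_n$ and braiding $C(x_i\otimes x_j)=q_{ij}x_j\otimes x_i$, $q_{ij}\in F^*$; $\mathfrak{B}(V)$ is its Nichols algebra, $\mathbb{Z}^n$-graded with $\deg x_i=e_i$. Let $\chi$ be the bicharacter of $\mathbb{Z}^n$ with $\chi(e_i,e_j)=q_{ij}$; put $p_{ij}:=q_{ij}$, $p_{uv}:=\chi(\deg u,\deg v)$ for homogeneous $u,v$, and $\tilde p_{x_i,x_j}:=p_{ij}p_{ji}$ (also for $i=j$). For homogeneous $x,y\in\mathfrak{B}(V)$ put $[x,y]:=yx-p_{yx}xy$; the Nichols braided Lie algebra $\mathfrak{L}(V)$ is the linear span in $\mathfrak{B}(V)$ of all iterated brackets (with any bracketing) of elements of $\{x_1,\dots,x_n\}$. A monomial is a word $u=h_1\cdots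 h_m$ ($m\ge1$, $h_j\in\{x_1,\dots,x_n\}$), also regarded as an element of $\mathfrak{B}(V)$; $\mu(u)$ is the set of letters occurring in the word. The pure generalized Dynkin graph $\Gamma(V)$ has vertex set $\{1,\dots,n\}$ and an edge $\{i,j\}$ ($i\neq j$) iff $p_{ij}p_{ji}\neq1$. A monomial $u$ is connected if the subgraph of $\Gamma(V)$ induced on $\{i: x_i\in\mu(u)\}$ is connected (a single vertex counts as connected), and disconnected otherwise. *)

(* Defs.v *)
(* Nichols algebra of diagonal type, modelled concretely:
   elements of the tensor algebra T(V) are formal linear combinations of words
   (seq of letters 'I_n); an element is zero in B(V) iff it lies in the kernel
   of the quantum symmetrizer (sum of the Matsumoto lifts T_sigma). *)
From HB Require Import structures.
From mathcomp Require Import all_boot all_order all_algebra all_fingroup.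
Set Implicit Arguments. Unset Strict Implicit. Unset Printing Implicit Defensive.
Import Order.TTheory GRing.Theory Num.Theory.
Local Open Scope ring_scope.

Section Nichols.
Variables (F : fieldType) (n : nat) (q : 'I_n -> 'I_n -> F).

Definition tens := seq (F * seq 'I_n)%type.

Definition mono (w : seq 'I_n) : tens := [:: (1, w)].
Definition tmul (a b : tens) : tens :=
  [seq (x.1 * y.1, x.2 ++ y.2) | x <- a, y <- b].
Definition tscale (c : F) (a : tens) : tens := [seq (c * x.1, x.2) | x <- a].
Definition tsub (a b : tens) : tens := a ++ tscale (-1) b.

Definition tcoef (a : tens) (w : seq 'I_n) : F :=
  \sum_(x <- a) (if x.2 == w then x.1 else 0).

(* T_sigma applied to the word w: letter at position k goes to position sigma k,
   with coefficient the product of q_{w_k w_l} over inversions k < l, sigma k > sigma l *)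
Definition Tcoef (w : seq 'I_n) (s : 'S_(size w)) : F :=
  \prod_(k : 'I_(size w))
     \prod_(l : 'I_(size w) | (k < l)%N && (s l < s k)%N)
        q (tnth (in_tuple w) k) (tnth (in_tuple w) l).
Definition Tword (w : seq 'I_n) (s : 'S_(size w)) : seq 'I_n :=
  [seq tnth (in_tuple w) ((s^-1)%g j) | j <- enum 'I_(size w)].

Definition omega_word (w : seq 'I_n) : tens :=
  [seq (Tcoef s, Tword s) | s <- enum 'S_(size w)].
Definition omega (a : tens) : tens :=
  flatten [seq tscale x.1 (omega_word x.2) | x <- a].

Definition bzero (a : tens) : Prop := forall w, tcoef (omega a) w = 0.

(* chi(deg s, deg t) for words / multisets of letters *)
Definition chi (s t : seq 'I_n) : F := \prod_(a <- s) \prod_(b <- t) q a b.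

Definition brk (x y : tens) (dx dy : seq 'I_n) : tens :=
  tsub (tmul y x) (tscale (chi dy dx) (tmul x y)).

Inductive btree := BLeaf of 'I_n | BNode of btree & btree.
Fixpoint leaves (t : btree) : seq 'I_n :=
  match t with BLeaf i => [:: i] | BNode l r => leaves l ++ leaves r end.
Fixpoint beval (t : btree) : tens :=
  match t with
  | BLeaf i => mono [:: i]
  | BNode l r => brk (beval l) (beval r) (leaves l) (leaves r)
  end.

Definition inL (a : tens) : Prop :=
  exists s : seq (F * btree)%type,
    bzero (tsub a (flatten [seq tscale c.1 (beval c.2) | c <- s])).

(* pure generalized Dynkin graph, restricted to the vertex set S *)
Definition dyn_edge (S : {set 'I_n}) : rel 'I_n :=
  fun i j => [&& i \in S, j \in S, i != j & q i j * q j i != 1].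
Definition connected_word (w : seq 'I_n) : bool :=
  let S := [set i | i \in w] in
  [forall i in S, forall j in S, connect (dyn_edge S) i j].
End Nichols.

(* Main.v *)
Require Import Defs.
From HB Require Import structures.
From mathcomp Require Import all_boot all_order all_algebra all_fingroup.
From Stdlib Require Import FunctionalExtensionality.
From mathcomp Require Import zify.
Set Implicit Arguments. Unset Strict Implicit. Unset Printing Implicit Defensive.
Import Order.TTheory GRing.Theory Num.Theory.
Local Open Scope ring_scope.

Section Aux.
Variables (F : fieldType) (n : nat) (q : 'I_n -> 'I_n -> F).

Definition lin (a : tens F n) (g : seq 'I_n -> F) : F := \sum_(x <- a) x.1 * g x.2.

Lemma lin_cat a b g : lin (a ++ b) g = lin a g + lin b g.
Proof. by rewrite /lin big_cat. Qed.

Lemma lin_scale c a g : lin (tscale c a) g = c * lin a g.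
Proof. by rewrite /lin /tscale big_map mulr_sumr; apply: eq_bigr => x _ /=; rewrite mulrA. Qed.

Lemma lin_sub a b g : lin (tsub a b) g = lin a g - lin b g.
Proof. by rewrite /tsub lin_cat lin_scale mulN1r. Qed.

Lemma lin_tmul a b g : lin (tmul a b) g =
  \sum_(x <- a) \sum_(y <- b) x.1 * y.1 * g (x.2 ++ y.2).
Proof.
elim: a => [|x a IH]; first by rewrite /lin /tmul !big_nil.
rewrite /tmul allpairs_cons lin_cat big_cons -IH; congr (_ + _).
by rewrite /lin big_map.
Qed.

Definition phi (z w : seq 'I_n) : F := tcoef (omega_word q w) z.

Lemma tcoef_cat (a b : tens F n) w : tcoef (a ++ b) w = tcoef a w + tcoef b w.
Proof. by rewrite /tcoef big_cat. Qed.

Lemma tcoef_scale c (a : tens F n) w : tcoef (tscale c a) w = c * tcoef a w.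
Proof.
rewrite /tcoef /tscale big_map mulr_sumr; apply: eq_bigr => x _ /=.
by case: ifP; rewrite ?mulr0.
Qed.

Lemma Phi_lin a z : tcoef (omega q a) z = lin a (phi z).
Proof.
elim: a => [|x a IH]; first by rewrite /lin big_nil /tcoef /omega big_nil.
by rewrite /omega /= tcoef_cat tcoef_scale -/(omega q a) IH /lin big_cons.
Qed.

Definition cF m (f : 'I_m -> 'I_n) (s : 'S_m) : F :=
  \prod_(k : 'I_m) \prod_(l : 'I_m | (k < l)%N && (s l < s k)%N) q (f k) (f l).
Definition wF m (f : 'I_m -> 'I_n) (s : 'S_m) : seq 'I_n :=
  [seq f ((s^-1)%g j) | j <- enum 'I_m].
Definition phiF m (f : 'I_m -> 'I_n) (z : seq 'I_n) : F :=
  \sum_(s : 'S_m) if wF f s == z then cF f s else 0.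

Lemma phi_phiF z w : phi z w = phiF (tnth (in_tuple w)) z.
Proof. by rewrite /phi /tcoef /omega_word big_map big_enum. Qed.

Lemma phi_fun z w m (f : 'I_m -> 'I_n) x0 : size w = m ->
  (forall k : 'I_m, f k = nth x0 w k) -> phi z w = phiF f z.
Proof.
move=> e; case: m / e in f * => Hf; rewrite phi_phiF.
have -> // : tnth (in_tuple w) = f.
by apply: functional_extensionality => k; rewrite Hf (tnth_nth x0).
Qed.

Definition Ep m (f : 'I_m -> 'I_n) (s : 'S_m) (kl : 'I_m * 'I_m) : F :=
  if (kl.1 < kl.2)%N && (s kl.2 < s kl.1)%N then q (f kl.1) (f kl.2) else 1.

Lemma cF_pair m f s : @cF m f s = \prod_kl Ep f s kl.
Proof.
rewrite /cF pair_big_dep /=.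
rewrite [RHS](bigID (fun kl : 'I_m * 'I_m => (kl.1 < kl.2)%N && (s kl.2 < s kl.1)%N)) /=.
rewrite [X in _ = _ * X]big1 ?mulr1; last by move=> kl /negbTE H; rewrite /Ep H.
by apply: eq_bigr => kl H; rewrite /Ep H.
Qed.

Lemma adj_swap m (f : 'I_m -> 'I_n) (p p' : 'I_m) z :
  val p' = (val p).+1 -> q (f p) (f p') * q (f p') (f p) = 1 ->
  phiF f z = q (f p) (f p') * phiF (fun k => f (tperm p p' k)) z.
Proof.
move=> Hp Hq; have Hp' : nat_of_ord p' = (nat_of_ord p).+1 := Hp; set t := tperm p p'.
have ptt : forall x, t (t x) = x by move=> x; rewrite tpermK.
rewrite /phiF [X in _ = _ * X](reindex_inj (mulgI t)) mulr_sumr; apply: eq_bigr => s _.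
have -> : wF (fun k => f (t k)) (t * s) = wF f s.
  by apply: eq_map => j /=; rewrite invMg permM tpermV ptt.
case: eqP => _; last by rewrite mulr0.
rewrite !cF_pair.
set pi := fun kl : 'I_m * 'I_m => (t kl.1, t kl.2).
have ipi : injective pi.
  by move=> [a b] [c d] [] /perm_inj -> /perm_inj ->.
rewrite [X in _ = _ * X](reindex_inj ipi) /=.
have pp' : p != p' by apply/eqP => e; move: Hp; rewrite e; lia.
have d1 : (p', p) != (p, p') by apply/eqP => -[e]; rewrite e eqxx in pp'.
rewrite (bigD1 (p, p')) //= (bigD1 (p', p)) //=.
rewrite [X in _ = _ * X](bigD1 (p, p')) //= [X in _ = _ * (_ * X)](bigD1 (p', p)) //=.
set A := \prod_(i | _) _; set B := \prod_(i | _) _.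
have -> : B = A.
  apply: eq_bigr => -[k l] /andP [H1 H2].
  rewrite /Ep /= !permM !ptt.
  have tv : forall x, nat_of_ord (t x) = if nat_of_ord x == nat_of_ord p then nat_of_ord p' else if nat_of_ord x == nat_of_ord p' then nat_of_ord p else nat_of_ord x.
    move=> x; rewrite /t; case: tpermP => [->|->|/eqP nx1 /eqP nx2]; rewrite ?eqxx //.
      by rewrite eq_sym (inj_eq (@ord_inj _)) (negbTE pp').
    by rewrite !(inj_eq (@ord_inj _)) (negbTE nx1) (negbTE nx2).
  have -> : (t k < t l)%N = (k < l)%N.
    rewrite !tv; move: H1 H2; rewrite /= !xpair_eqE -!(inj_eq (@ord_inj _)).
    repeat (case: eqP => ?); move=> //= *; apply/idP/idP => ?; lia.
  by [].
rewrite /Ep /= !permM /t !tpermL tpermR.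
have -> : (p < p')%N by rewrite Hp.
have -> : (p' < p)%N = false by rewrite Hp ltnNge leqnSn.
rewrite /=.
have tL : t p = p' by rewrite /t tpermL.
rewrite -/t tL.
have sne : s p != s p' by rewrite (inj_eq perm_inj).
case: (ltngtP (s p') (s p)) => H.
- by rewrite !mul1r.
- by rewrite !mul1r mulrA Hq mul1r.
- by move: sne; rewrite -(inj_eq (@ord_inj _)) H eqxx.
Qed.

Lemma nth_swap (x0 i j : 'I_n) L R k :
  k != size L -> k != (size L).+1 ->
  nth x0 (L ++ i :: j :: R) k = nth x0 (L ++ j :: i :: R) k.
Proof.
move=> h1 h2; rewrite !nth_cat; case: ltnP => // hk.
have : (k - size L = (k - size L - 2).+2)%N by lia.
by move=> ->.
Qed.

Lemma phi_adj z L (i j : 'I_n) R : q i j * q j i = 1 ->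
  phi z (L ++ i :: j :: R) = q i j * phi z (L ++ j :: i :: R).
Proof.
move=> Hq; set w := L ++ i :: j :: R.
have sz : ((size L).+1 < size w)%N by rewrite size_cat /=; lia.
pose p : 'I_(size w) := Ordinal (ltnW sz); pose p' : 'I_(size w) := Ordinal sz.
have fp : tnth (in_tuple w) p = i by rewrite (tnth_nth i) /= nth_cat ltnn subnn.
have fp' : tnth (in_tuple w) p' = j.
  by rewrite (tnth_nth i) /= nth_cat ltnNge leqnSn /= subSn // subnn.
rewrite phi_phiF (@adj_swap _ _ p p') ?fp ?fp' //; congr (_ * _); symmetry.
apply: (@phi_fun _ _ _ _ i); first by rewrite /w !size_cat.
move=> k; rewrite (tnth_nth i); case: tpermP => [ek|ek|nk1 nk2].
- rewrite ek /= /w !nth_cat ltnNge leqnSn ltnn /= subSn // subnn.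
  by [].
- rewrite ek /= /w !nth_cat ltnn ltnNge leqnSn /= subSn // subnn.
  by [].
- apply: nth_swap.
  + by apply/eqP => e; apply: nk1; apply: ord_inj.
  + by apply/eqP => e; apply: nk2; apply: ord_inj.
Qed.

Lemma phi_letter z L (i : 'I_n) u R : (forall j, j \in u -> q i j * q j i = 1) ->
  phi z (L ++ i :: u ++ R) = (\prod_(b <- u) q i b) * phi z (L ++ u ++ i :: R).
Proof.
elim: u L => [|j u IH] L Hc; first by rewrite big_nil mul1r.
rewrite /= phi_adj; last by apply: Hc; rewrite inE eqxx.
have -> : L ++ j :: i :: u ++ R = (L ++ [:: j]) ++ i :: u ++ R by rewrite -catA.
rewrite IH; last by move=> k hk; apply: Hc; rewrite inE hk orbT.
by rewrite -catA big_cons mulrA.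
Qed.

Lemma phi_block z L v u R :
  (forall i j, i \in v -> j \in u -> q i j * q j i = 1) ->
  phi z (L ++ v ++ u ++ R) = chi q v u * phi z (L ++ u ++ v ++ R).
Proof.
elim: v L => [|i v IH] L Hc; first by rewrite /chi big_nil mul1r.
have -> : L ++ (i :: v) ++ u ++ R = (L ++ [:: i]) ++ v ++ u ++ R by rewrite -catA.
rewrite IH; last by move=> a b ha hb; apply: Hc => //; rewrite inE ha orbT.
rewrite -catA /= phi_letter; last by move=> j hj; apply: Hc => //; rewrite inE eqxx.
by rewrite /chi big_cons mulrA [X in X * _ = _]mulrC.
Qed.

Definition Kp (T : tens F n) :=
  forall z L R, lin T (fun w => phi z (L ++ w ++ R)) = 0.

Lemma Kp_bzero T : Kp T -> bzero q T.
Proof.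
move=> H w; rewrite Phi_lin -(H w [::] [::]); apply: eq_bigr => x _.
by rewrite /= cats0.
Qed.

Lemma Kp_sub a b : Kp a -> Kp b -> Kp (tsub a b).
Proof. by move=> Ha Hb z L R; rewrite lin_sub Ha Hb subr0. Qed.

Lemma Kp_scale c a : Kp a -> Kp (tscale c a).
Proof. by move=> Ha z L R; rewrite lin_scale Ha mulr0. Qed.

Lemma Kp_mull A T : Kp T -> Kp (tmul A T).
Proof.
move=> H z L R; rewrite lin_tmul big1 // => x _.
rewrite -[RHS](mulr0 x.1) -[X in _ = _ * X](H z (L ++ x.2) R) /lin mulr_sumr.
by apply: eq_bigr => y _; rewrite mulrA !catA.
Qed.

Lemma Kp_mulr T A : Kp T -> Kp (tmul T A).
Proof.
move=> H z L R; rewrite lin_tmul exchange_big big1 //= => y _.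
rewrite -[RHS](mulr0 y.1) -[X in _ = _ * X](H z L (y.2 ++ R)) /lin mulr_sumr.
by apply: eq_bigr => x _; rewrite mulrCA mulrA !catA.
Qed.

Definition WP (T : tens F n) (s : seq 'I_n) := forall x, x \in T -> perm_eq x.2 s.

Lemma beval_WP t : WP (beval q t) (leaves t).
Proof.
elim: t => [i|l IHl r IHr] x /=.
  by rewrite /mono inE => /eqP -> /=.
rewrite /brk /tsub mem_cat => /orP [].
  rewrite /tmul; case/allpairsP => -[y y'] [/= hy hy' ->] /=.
  by rewrite perm_catC; apply: perm_cat; [apply: IHl | apply: IHr].
case/mapP => x' hx' ->; rewrite /tmul in hx'; case/mapP: hx' => x'' hx'' ->.
rewrite /tmul in hx''; case/allpairsP: hx'' => -[y y'] [/= hy hy' ->] /=.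
by apply: perm_cat; [apply: IHl | apply: IHr].
Qed.

Lemma chi_perm s s' t t' : perm_eq s s' -> perm_eq t t' -> chi q s t = chi q s' t'.
Proof.
move=> Ps Pt; rewrite /chi (perm_big _ Ps); apply: eq_bigr => a _.
exact: perm_big.
Qed.

Lemma Kbase T1 T2 s1 s2 : WP T1 s1 -> WP T2 s2 ->
  (forall i j, i \in s1 -> j \in s2 -> q i j * q j i = 1) ->
  Kp (brk q T1 T2 s1 s2).
Proof.
move=> W1 W2 Hc z L R; rewrite /brk lin_sub lin_scale !lin_tmul exchange_big /=.
apply/eqP; rewrite subr_eq0; apply/eqP.
rewrite mulr_sumr big_seq [RHS]big_seq; apply: eq_bigr => x hx.
rewrite mulr_sumr big_seq [RHS]big_seq; apply: eq_bigr => y hy.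
rewrite catA -(catA L) -catA phi_block; last first.
  move=> a b ha hb; rewrite mulrC; apply: Hc.
  - by rewrite -(perm_mem (W1 _ hx)).
  - by rewrite -(perm_mem (W2 _ hy)).
rewrite (chi_perm (W2 _ hy) (W1 _ hx)) !catA.
by rewrite mulrCA mulrA [y.1 * x.1]mulrC mulrA.
Qed.

Lemma conn_single (i : 'I_n) : connected_word q [:: i].
Proof.
rewrite /connected_word; apply/forallP => a; apply/implyP; rewrite inE inE => /eqP ->.
by apply/forallP => b; apply/implyP; rewrite inE inE => /eqP ->; apply: connect0.
Qed.

Lemma conn_perm s s' : perm_eq s s' -> connected_word q s = connected_word q s'.
Proof.
move=> P; rewrite /connected_word.
have -> : [set i | i \in s] = [set i | i \in s'] by apply/setP => i; rewrite !inE (perm_mem P).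
by [].
Qed.

Lemma conn_union s1 s2 i j : connected_word q s1 -> connected_word q s2 ->
  i \in s1 -> j \in s2 -> q i j * q j i != 1 -> connected_word q (s1 ++ s2).
Proof.
rewrite /connected_word => H1 H2 hi hj hq.
set S := [set k | k \in s1 ++ s2].
have sym : connect_sym (dyn_edge q S).
  apply: sym_connect_sym => a b; rewrite /dyn_edge mulrC eq_sym.
  by case: (a \in S); case: (b \in S).
have lift : forall (s : seq 'I_n) a b, {subset s <= s1 ++ s2} ->
    connect (dyn_edge q [set k | k \in s]) a b -> connect (dyn_edge q S) a b.
  move=> s a b sub; apply: connect_sub => x y /and4P [hx hy hxy he].
  apply: connect1; rewrite /dyn_edge hxy he !inE !sub //.
  + by move: hy; rewrite inE.
  + by move: hx; rewrite inE.
have c1 : forall a, a \in s1 -> connect (dyn_edge q S) i a.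
  move=> a ha; apply: (lift s1); first by move=> x hx; rewrite mem_cat hx.
  by move/forallP: H1 => /(_ i) /implyP; rewrite inE => /(_ hi) /forallP /(_ a) /implyP; rewrite inE; apply.
have c2 : forall a, a \in s2 -> connect (dyn_edge q S) j a.
  move=> a ha; apply: (lift s2); first by move=> x hx; rewrite mem_cat hx orbT.
  by move/forallP: H2 => /(_ j) /implyP; rewrite inE => /(_ hj) /forallP /(_ a) /implyP; rewrite inE; apply.
have cij : connect (dyn_edge q S) i j.
  have [<-|nij] := eqVneq i j; first exact: connect0.
  by apply: connect1; rewrite /dyn_edge !inE !mem_cat hi hj orbT nij hq.
have ci : forall a, a \in S -> connect (dyn_edge q S) i a.
  move=> a; rewrite inE mem_cat => /orP [ha|ha]; first exact: c1.
  exact: connect_trans cij (c2 a ha).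
apply/forallP => a; apply/implyP => ha; apply/forallP => b; apply/implyP => hb.
by apply: connect_trans (ci b hb); rewrite sym; apply: ci.
Qed.

Lemma Kp_tree t : ~~ connected_word q (leaves t) -> Kp (beval q t).
Proof.
elim: t => [i|l IHl r IHr] /=; first by rewrite conn_single.
move=> Hd; rewrite /brk.
case cl: (connected_word q (leaves l)); last first.
  apply: Kp_sub; first by apply: Kp_mull; apply: IHl; rewrite cl.
  by apply: Kp_scale; apply: Kp_mulr; apply: IHl; rewrite cl.
case cr: (connected_word q (leaves r)); last first.
  apply: Kp_sub; first by apply: Kp_mulr; apply: IHr; rewrite cr.
  by apply: Kp_scale; apply: Kp_mull; apply: IHr; rewrite cr.
apply: Kbase; [exact: beval_WP | exact: beval_WP |].
move=> i j hi hj; apply/eqP; apply: contraNT Hd => hq.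
exact: conn_union cl cr hi hj hq.
Qed.

Lemma phi_deg z w : ~~ perm_eq w z -> phi z w = 0.
Proof.
move=> Hp; rewrite phi_phiF /phiF big1 // => s _.
case: eqP => // e; exfalso; move/negP: Hp; apply.
rewrite -e /wF perm_sym.
have E : [seq tnth (in_tuple w) j | j <- enum 'I_(size w)] = w := map_tnth_enum _.
rewrite -[X in perm_eq _ X]E.
have -> : [seq tnth (in_tuple w) ((s^-1)%g j) | j <- enum 'I_(size w)] =
  map (tnth (in_tuple w)) (map (s^-1)%g (enum 'I_(size w))).
  by elim: (enum _) => //= a l ->.
apply: perm_map; apply: uniq_perm.
- by rewrite map_inj_uniq ?enum_uniq //; apply: perm_inj.
- exact: enum_uniq.
- by move=> x; rewrite mem_enum; apply/mapP; exists (s x); rewrite ?mem_enum ?permK.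
Qed.

Lemma Kp_lin0 T z : Kp T -> lin T (phi z) = 0.
Proof. by move=> H; rewrite -(H z [::] [::]); apply: eq_bigr => x _; rewrite /= cats0. Qed.

Lemma lin_beval_deg t h z : perm_eq h z -> ~~ connected_word q h ->
  lin (beval q t) (phi z) = 0.
Proof.
move=> Phz Hd; case Pt: (perm_eq (leaves t) h).
  by apply: Kp_lin0; apply: Kp_tree; rewrite (conn_perm Pt).
rewrite /lin big_seq big1 // => x hx; rewrite phi_deg ?mulr0 //.
apply/negP => Pxz; move/negP: Pt; apply.
have P1 : perm_eq x.2 (leaves t) by apply: beval_WP.
rewrite perm_sym in P1; apply: perm_trans P1 (perm_trans Pxz _); by rewrite perm_sym.
Qed.

End Aux.

Theorem lemma2p2 (F : closedFieldType) (hchar : [pchar F] =i pred0)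
    (n : nat) (q : 'I_n -> 'I_n -> F) (hq : forall i j, q i j != 0) :
  (* (i) *)
  (forall u v : seq 'I_n, u != [::] -> v != [::] ->
     (forall i j, i \in u -> j \in v -> q i j * q j i = 1) ->
     bzero q (brk q (mono F u) (mono F v) u v))
  /\
  (* (ii) *)
  (forall h : seq 'I_n, h != [::] -> ~~ connected_word q h ->
     forall t : btree n, leaves t = h -> bzero q (beval q t))
  /\
  (* (iii) *)
  (forall h : seq 'I_n, h != [::] -> ~ bzero q (mono F h) ->
     ~~ connected_word q h -> ~ inL q (mono F h)).
Proof.
split; [|split].
- move=> u v _ _ Hc; apply: Kp_bzero; apply: Kbase => //.
  + by move=> x; rewrite /mono inE => /eqP ->.
  + by move=> x; rewrite /mono inE => /eqP ->.
- move=> h _ Hd t ht; apply: Kp_bzero; apply: Kp_tree; by rewrite ht.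
- move=> h _ Hnz Hd [s Hs]; apply: Hnz => z.
  have lm : lin (mono F h) (phi q z) = phi q z h.
    by rewrite /lin big_cons big_nil /= mul1r addr0.
  rewrite Phi_lin lm.
  case Phz: (perm_eq h z); last by rewrite phi_deg // Phz.
  have := Hs z; rewrite Phi_lin lin_sub lm => <-.
  suff -> : lin (flatten [seq tscale c.1 (beval q c.2) | c <- s]) (phi q z) = 0.
    by rewrite subr0.
  elim: s {Hs} => [|c s IH] /=; first by rewrite /lin big_nil.
  by rewrite lin_cat lin_scale IH (lin_beval_deg _ Phz Hd) mulr0 addr0.
Qed.
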